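(* Let $\mathfrak{o}$ be a compact discrete valuation ring with uniformizer $\pi$, maximal ideal $\mathfrak{p}$ and residue field $\mathbb{F}_q$, let $\mathfrak{o}_r=\mathfrak{o}/\mathfrak{p}^r$, $\mathfrak{g}=\mathfrak{sl}_n(\mathfrak{o})$ and $\mathfrak{g}_r=\mathfrak{sl}_n(\mathfrak{o}_r)$. Let $\kappa$ be the symmetric invariant $\mathfrak{o}$-bilinear form on $\mathfrak{g}$ fixed in the paper, assumed non-degenerate modulo $\mathfrak{p}$, and let $\kappa_1$ be the induced $\mathbb{F}_q$-bilinear form on $\mathfrak{g}_1=\mathfrak{sl}_n(\mathbb{F}_q)$. Let $r\in\mathbb{N}$, $e\in\mathfrak{g}_r$, let $b\in\mathfrak{g}_{r+1}$ be a shadow-preserving lift of $e$, let $x_c\in\mathfrak{g}_{r+1}$ with reduction $\bar{x}_c\in\mathfrak{g}_1$, and put $x=b+\pi^rx_c\in\mathfrak{g}_{r+1}$. Let $c$ be the linear functional $z\mapsto\kappa_1(\bar{x}_c,z)$ on $\mathrm{sh}_{\mathfrak{g}_r}(e)$, and let $$\mathrm{stab}_{\mathrm{sh}_{\mathfrak{g}_r}(e)}(c)=\{y\in\mathrm{sh}_{\mathfrak{g}_r}(e) : c([y,z])=0\ \text{for all } z\in\mathrm{sh}_{\mathfrak{g}_r}(e)\}.$$ Then $\mathrm{stab}_{\mathrm{sh}_{\mathfrak{g}_r}(e)}(c)=\mathrm{sh}_{\mathfrak{g}_{r+1}}(x)$.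
   Context: Lie shadow: for $a\in\mathfrak{g}_r$, $\mathrm{sh}_{\mathfrak{g}_r}(a)$ is the image in $\mathfrak{g}_1$ of the centralizer $C_{\mathfrak{g}_r}(a)$ under reduction modulo $\mathfrak{p}$. A lift $b\in\mathfrak{g}_{r+1}$ of $e\in\mathfrak{g}_r$ (i.e. $b$ reduces to $e$ modulo $\mathfrak{p}^r$) is shadow-preserving if $\mathrm{sh}_{\mathfrak{g}_{r+1}}(b)=\mathrm{sh}_{\mathfrak{g}_r}(e)$. *)

(* Defs.v *)
From HB Require Import structures.
From mathcomp Require Import all_boot all_order all_algebra.
Set Implicit Arguments. Unset Strict Implicit. Unset Printing Implicit Defensive.
Import GRing.Theory.
Local Open Scope ring_scope.

Definition pdvd (o : comRingType) (d a : o) : Prop := exists c : o, a = c * d.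

Definition mxcong (o : comRingType) (n : nat) (d : o) (A B : 'M[o]_n) : Prop :=
  forall i j, pdvd d ((A - B) i j).

Definition is_DVR_unif (o : idomainType) (pi : o) : Prop :=
  [/\ pi != 0, pi \notin GRing.unit &
      forall a : o, a != 0 -> exists u : o, exists k : nat,
        u \is a GRing.unit /\ a = u * pi ^+ k].

(* Compactness of a DVR (for the pi-adic topology) = finite residue field +
   completeness (every pi-adically Cauchy sequence converges). *)
Definition compact_DVR (o : idomainType) (pi : o) : Prop :=
  (exists s : seq o, forall a : o, exists2 t, t \in s & pdvd pi (a - t)) /\
  (forall f : nat -> o, (forall k, pdvd (pi ^+ k) (f k.+1 - f k)) ->
     exists l : o, forall k, pdvd (pi ^+ k) (l - f k)).

(* Elements of g_r = sl_n(o/p^r) are represented by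
   elements of sl_n(o) (the reduction map is surjective), up to congruence mod pi^r;
   elements of g_1 are represented by matrices up to congruence mod pi. *)
Definition in_sl (o : comRingType) (n : nat) (A : 'M[o]_n) : Prop := \tr A = 0.

Definition lie (o : comRingType) (n : nat) (A B : 'M[o]_n) : 'M[o]_n :=
  A *m B - B *m A.

Definition centr (o : comRingType) (n : nat) (pi : o) (r : nat) (a y : 'M[o]_n)
  : Prop := in_sl y /\ mxcong (pi ^+ r) (lie a y) 0.

(* Lie shadow sh_{g_r}(a): image of C_{g_r}(a) in g_1 under reduction mod p;
   z (a representative of an element of g_1) lies in it iff it is congruent
   mod pi to some element of the centralizer. *)
Definition shadow (o : comRingType) (n : nat) (pi : o) (r : nat) (a z : 'M[o]_n)
  : Prop := exists y, centr pi r a y /\ mxcong pi z y.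

Definition good_form (o : comRingType) (n : nat) (pi : o)
    (kappa : 'M[o]_n -> 'M[o]_n -> o) : Prop :=
  [/\ (forall (a : o) x y z, in_sl x -> in_sl y -> in_sl z ->
         kappa (a *: x + y) z = a * kappa x z + kappa y z),
      (forall (a : o) x y z, in_sl x -> in_sl y -> in_sl z ->
         kappa x (a *: y + z) = a * kappa x y + kappa x z),
      (forall x y, in_sl x -> in_sl y -> kappa x y = kappa y x),
      (forall x y z, in_sl x -> in_sl y -> in_sl z ->
         kappa (lie x y) z = kappa x (lie y z)) &
      (forall x, in_sl x -> (forall y, in_sl y -> pdvd pi (kappa x y)) ->
         forall i j, pdvd pi (x i j))].

Definition stab_sh (o : comRingType) (n : nat) (pi : o)
    (kappa : 'M[o]_n -> 'M[o]_n -> o) (r : nat) (e xc y : 'M[o]_n) : Prop :=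
  shadow pi r e y /\
  forall z, shadow pi r e z -> pdvd pi (kappa xc (lie y z)).

(* Main.v *)
Require Import Defs.
From HB Require Import structures.
From mathcomp Require Import all_boot all_order all_algebra all_fingroup.
From mathcomp Require Import ring.
Set Implicit Arguments. Unset Strict Implicit. Unset Printing Implicit Defensive.
Import GRing.Theory.
Local Open Scope ring_scope.



Lemma pdvd0 (o : comRingType) (d : o) : pdvd d 0.
Proof. by exists 0; rewrite mul0r. Qed.
Lemma pdvdD (o : comRingType) (d a b : o) : pdvd d a -> pdvd d b -> pdvd d (a + b).
Proof. by move=> [c ->] [c' ->]; exists (c + c'); rewrite mulrDl. Qed.
Lemma pdvdN (o : comRingType) (d a : o) : pdvd d a -> pdvd d (- a).
Proof. by move=> [c ->]; exists (- c); rewrite mulNr. Qed.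
Lemma pdvdB (o : comRingType) (d a b : o) : pdvd d a -> pdvd d b -> pdvd d (a - b).
Proof. by move=> ha hb; apply: pdvdD => //; apply: pdvdN. Qed.
Lemma pdvdMl (o : comRingType) (d a b : o) : pdvd d b -> pdvd d (a * b).
Proof. by move=> [c ->]; exists (a * c); rewrite mulrA. Qed.
Lemma pdvdMr (o : comRingType) (d a b : o) : pdvd d a -> pdvd d (a * b).
Proof. by move=> h; rewrite mulrC; apply: pdvdMl. Qed.
Lemma pdvd_sum (o : comRingType) (d : o) (I : finType) (F : I -> o) :
  (forall i, pdvd d (F i)) -> pdvd d (\sum_i F i).
Proof.
move=> h; elim/big_rec: _ => [|i x _ hx]; first exact: pdvd0.
by apply: pdvdD.
Qed.
Lemma pdvd_trans (o : comRingType) (d e a : o) : pdvd d e -> pdvd e a -> pdvd d a.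
Proof. by move=> [c ->] [c' ->]; exists (c' * c); rewrite mulrA. Qed.
Lemma pdvd_refl (o : comRingType) (d : o) : pdvd d d.
Proof. by exists 1; rewrite mul1r. Qed.
Lemma pdvd_exp (o : comRingType) (p : o) k m : (k <= m)%N -> pdvd (p ^+ k) (p ^+ m).
Proof. by move=> h; exists (p ^+ (m - k)); rewrite -exprD subnK. Qed.
Lemma pdvd_weak (o : comRingType) (p a : o) k m : (k <= m)%N ->
  pdvd (p ^+ m) a -> pdvd (p ^+ k) a.
Proof. by move=> h; apply: pdvd_trans; apply: pdvd_exp. Qed.
Lemma pdvd_cancel (o : idomainType) (p a : o) k : p != 0 ->
  pdvd (p ^+ k.+1) (p ^+ k * a) -> pdvd p a.
Proof.
move=> p0 [c]; rewrite exprSr mulrA (mulrC c) -mulrA => /mulfI h.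
by exists c; apply: h; rewrite expf_neq0.
Qed.
Lemma pdvd_cancelk (o : idomainType) (p a : o) k : p != 0 ->
  pdvd (p ^+ k) (p ^+ k * a) -> True.
Proof. by []. Qed.

Lemma dvr_nonunit (o : idomainType) (pi a : o) : is_DVR_unif pi ->
  a \notin GRing.unit -> pdvd pi a.
Proof.
case=> p0 pu h au; have [->|a0] := eqVneq a 0; first exact: pdvd0.
have [u [[|k] [uu ha]]] := h a a0; first by rewrite ha expr0 mulr1 uu in au.
by exists (u * pi ^+ k); rewrite ha exprSr mulrA.
Qed.

Lemma dvr_val (o : idomainType) (pi a : o) : is_DVR_unif pi -> a != 0 ->
  exists u k, u \is a GRing.unit /\ a = u * pi ^+ k.
Proof. by case=> _ _ h; apply: h. Qed.

Lemma dvr_cmp (o : idomainType) (pi a b : o) : is_DVR_unif pi ->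
  pdvd a b \/ pdvd b a.
Proof.
move=> hd; have [->|a0] := eqVneq a 0; first by right; exists 0; rewrite mul0r.
have [->|b0] := eqVneq b 0; first by left; exact: pdvd0.
have [u [k [uu ->]]] := dvr_val hd a0; have [v [m [vu ->]]] := dvr_val hd b0.
case: (leqP k m) => hkm.
  left; exists (v / u * pi ^+ (m - k)).
  by rewrite mulrACA divrK // -exprD subnK.
right; exists (u / v * pi ^+ (k - m)).
by rewrite mulrACA divrK // -exprD subnK // ltnW.
Qed.

Lemma dvr_split (o : idomainType) (pi d : o) r : is_DVR_unif pi ->
  pdvd d (pi ^+ r) \/ pdvd (pi ^+ r.+1) d.
Proof.
move=> hd; have [->|d0] := eqVneq d 0; first by right; exact: pdvd0.
have [u [k [uu ->]]] := dvr_val hd d0.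
case: (leqP k r) => hkr.
  left; exists (u^-1 * pi ^+ (r - k)).
  by rewrite mulrACA mulVr // mul1r -exprD subnK.
by right; exists (u * pi ^+ (k - r.+1)); rewrite -mulrA -exprD subnK.
Qed.


Lemma min_div (o : idomainType) (pi : o) (hd : is_DVR_unif pi) (I : finType)
  (F : I -> o) (i0 : I) : exists k, forall l, pdvd (F k) (F l).
Proof.
suff: forall s : seq I, s = [::] \/ exists k, forall l, l \in s -> pdvd (F k) (F l).
  case/(_ (enum I)) => [e|[k hk]].
    by have := mem_enum I i0; rewrite e.
  by exists k => l; apply: hk; rewrite mem_enum.
elim=> [|x s [->|[k hk]]]; first by left.
  by right; exists x => l; rewrite inE => /eqP ->; apply: pdvd_refl.
right; case: (dvr_cmp (F k) (F x) hd) => h.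
  by exists k => l; rewrite inE => /orP [/eqP ->|/hk].
exists x => l; rewrite inE => /orP [/eqP ->|/hk]; first exact: pdvd_refl.
exact: pdvd_trans.
Qed.

Lemma elim_step (o : idomainType) N (A1 : 'M[o]_(1 + N)) :
  (forall k l, pdvd (A1 0 0) (A1 k l)) ->
  exists L Rm (A2 : 'M[o]_N), [/\ L \in unitmx, Rm \in unitmx &
    L *m A1 *m Rm = block_mx (A1 0 0)%:M 0 0 A2].
Proof.
move=> dA1.
have [c hc] := fin_all_exists (fun k : 'I_N => dA1 (rshift 1 k) 0).
have [r hr] := fin_all_exists (fun k : 'I_N => dA1 0 (rshift 1 k)).
set C : 'M[o]_(N, 1) := \col_k c k.
set R : 'M[o]_(1, N) := \row_k r k.
have hul : ulsubmx A1 = (A1 0 0)%:M.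
  by rewrite {1}[ulsubmx A1]mx11_scalar !mxE lshift0.
have hdl : dlsubmx A1 = C *m (A1 0 0)%:M.
  apply/matrixP => k l; rewrite mul_mx_scalar !mxE ord1 lshift0 hc.
  by rewrite mulrC.
have hur : ursubmx A1 = (A1 0 0)%:M *m R.
  apply/matrixP => k l; rewrite mul_scalar_mx !mxE ord1 lshift0 hr.
  by rewrite mulrC.
exists (block_mx 1 0 (- C) 1), (block_mx 1 (- R) 0 1),
   (drsubmx A1 - C *m ursubmx A1); split.
- by rewrite unitmxE det_lblock !det1 mul1r unitr1.
- by rewrite unitmxE det_ublock !det1 mul1r unitr1.
rewrite -[A1 in LHS]submxK hdl hur hul !mulmx_block.
rewrite !mul1mx !mul0mx !mulmx1 !mulmx0 !addr0 ?add0r.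
by rewrite mulmxN addNr mulNmx addNr mul0mx add0r addrC mulNmx.
Qed.


Lemma smith (o : idomainType) (pi : o) (hd : is_DVR_unif pi) N (A : 'M[o]_N) :
  exists P Q (d : 'rV[o]_N), [/\ P \in unitmx, Q \in unitmx & P *m A *m Q = diag_mx d].
Proof.
elim: N A => [|N IH] A.
  exists 1%:M, 1%:M, 0; rewrite !unitmx1; split => //.
  by apply/matrixP => [[]].
have [[i j] hij] := min_div hd (fun k : 'I_N.+1 * 'I_N.+1 => A k.1 k.2) (0, 0).
rewrite /= in hij.
pose T1 : 'M[o]_N.+1 := perm_mx (tperm 0 i).
pose T2 : 'M[o]_N.+1 := perm_mx (tperm 0 j).
have eA1 k l : (T1 *m A *m T2) k l = A (tperm 0 i k) (tperm 0 j l).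
  have -> : T2 = perm_mx (tperm 0 j)^-1 by rewrite tpermV.
  by rewrite /T1 -row_permE -col_permE !mxE.
move: eA1; set A1 : 'M[o]_(1 + N) := T1 *m A *m T2 => eA1.
have dA1 k l : pdvd (A1 0 0) (A1 k l) by rewrite !eA1 !tpermL; apply: (hij (_, _)).
have [L [Rm [A2 [uL uR e1]]]] := elim_step dA1.
have [P' [Q' [d' [uP' uQ' hPQ']]]] := IH A2.
exists (block_mx 1 0 0 P' *m L *m T1), (T2 *m Rm *m block_mx 1 0 0 Q'),
  (row_mx (A1 0 0)%:M d'); split.
- rewrite !unitmx_mul unitmx_perm uL !andbT.
  by rewrite unitmxE (@det_ublock _ 1 N) det1 mul1r -unitmxE uP'.
- rewrite !unitmx_mul unitmx_perm uR.
  by rewrite unitmxE (@det_ublock _ 1 N) det1 mul1r -unitmxE uQ'.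
have -> : block_mx 1 0 0 P' *m L *m T1 *m A *m (T2 *m Rm *m block_mx 1 0 0 Q')
  = block_mx 1 0 0 P' *m (L *m A1 *m Rm) *m block_mx 1 0 0 Q'.
  by rewrite /A1 !mulmxA.
rewrite e1 !mulmx_block !mul1mx !mul0mx !mulmx1 !mulmx0 !addr0 ?add0r hPQ'.
rewrite (@diag_mx_row _ N 1) mul0mx.
suff -> : diag_mx (A1 0 0)%:M = (A1 0 0)%:M :> 'M[o]_1 by [].
by apply/matrixP => k l; rewrite !ord1 !mxE eqxx !mulr1n.
Qed.


Definition mc (o : comRingType) m n (d : o) (A B : 'M[o]_(m, n)) :=
  forall i j, pdvd d ((A - B) i j).

Lemma mc_refl (o : comRingType) m n (d : o) (A : 'M[o]_(m, n)) : mc d A A.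
Proof. by move=> i j; rewrite subrr mxE; apply: pdvd0. Qed.
Lemma mc_sym (o : comRingType) m n (d : o) (A B : 'M[o]_(m, n)) : mc d A B -> mc d B A.
Proof. by move=> h i j; rewrite -opprB mxE; apply: pdvdN; apply: h. Qed.
Lemma mc_trans (o : comRingType) m n (d : o) (A B C : 'M[o]_(m, n)) :
  mc d A B -> mc d B C -> mc d A C.
Proof.
move=> h1 h2 i j; rewrite -(subrK B A) -addrA mxE.
by apply: pdvdD; [apply: h1 | apply: h2].
Qed.
Lemma mc_mulr (o : comRingType) m n p (d : o) (A B : 'M[o]_(m, n)) (M : 'M[o]_(n, p)) :
  mc d A B -> mc d (A *m M) (B *m M).
Proof.
move=> h i j; rewrite -mulmxBl mxE; apply: pdvd_sum => k.
by apply: pdvdMr; apply: h.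
Qed.
Lemma mc_mull (o : comRingType) m n p (d : o) (A B : 'M[o]_(n, p)) (M : 'M[o]_(m, n)) :
  mc d A B -> mc d (M *m A) (M *m B).
Proof.
move=> h i j; rewrite -mulmxBr mxE; apply: pdvd_sum => k.
by apply: pdvdMl; apply: h.
Qed.
Lemma mc_opp (o : comRingType) m n (d : o) (A : 'M[o]_(m, n)) :
  mc d A 0 -> mc d (- A) 0.
Proof. by move=> h i j; rewrite !subr0 mxE; apply: pdvdN; have := h i j; rewrite subr0. Qed.

Lemma pdvd1_unit (o : comUnitRingType) (p : o) : pdvd p 1 -> p \is a GRing.unit.
Proof. by case=> c h; apply/unitrP; exists c; split; [rewrite h | rewrite mulrC h]. Qed.

Lemma gram_unit (o : idomainType) (pi : o) (hd : is_DVR_unif pi) N (G : 'M[o]_N) :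
  (forall v : 'rV[o]_N, mc pi (v *m G) 0 -> mc pi v 0) -> G \in unitmx.
Proof.
move=> hG; have [P [Q [d [uP uQ hPQ]]]] := smith hd G.
have hdu i : d 0 i \is a GRing.unit.
  apply/negPn/negP => nu; have hpi := dvr_nonunit hd nu.
  have : mc pi (('e_i : 'rV[o]_N) *m P) 0.
    apply: hG; have -> : ('e_i : 'rV[o]_N) *m P *m G = 'e_i *m diag_mx d *m invmx Q.
      by rewrite -hPQ !mulmxA mulmxK.
    rewrite -rowE row_diag_mx => k l; rewrite subr0 -scalemxAl mxE.
    exact: pdvdMr.
  move/(mc_mulr (invmx P)); rewrite mul0mx mulmxK // => /(_ 0 i).
  rewrite subr0 mxE !eqxx /= => /pdvd1_unit pu.
  by case: hd => _ /negP; rewrite pu.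
have hD : diag_mx d \in unitmx.
  rewrite unitmxE det_diag; apply: (big_ind (fun x : o => x \is a GRing.unit)) => //; first exact: unitr1.
  by move=> x y ux uy; rewrite unitrM ux uy.
have -> : G = invmx P *m diag_mx d *m invmx Q by rewrite -hPQ !mulmxA mulmxK // mulVmx // mul1mx.
by rewrite !unitmx_mul !unitmx_inv uP uQ hD.
Qed.

Lemma core (o : idomainType) (pi : o) (hd : is_DVR_unif pi) N (G A : 'M[o]_N)
  (t : 'rV[o]_N) r :
  G \in unitmx -> A *m G = - (G *m A^T) ->
  (forall u w : 'rV[o]_N, mc (pi ^+ r.+1) (pi ^+ r *: w) (u *m A) ->
     pdvd pi ((t *m G *m w^T) 0 0)) ->
  exists s : 'rV[o]_N, mc pi s t /\ mc (pi ^+ r.+1) (s *m A) 0.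
Proof.
move=> uG hskew hyp.
have [P [Q [d [uP uQ hPQ]]]] := smith hd A.
have hA : A = invmx P *m diag_mx d *m invmx Q.
  by rewrite -hPQ !mulmxA mulmxK // mulVmx // mul1mx.
pose sg := t *m G *m (invmx Q)^T.
have hsg i : pdvd (d 0 i) (pi ^+ r) -> pdvd pi (sg 0 i).
  case=> c hc.
  have := hyp (c *: ('e_i : 'rV[o]_N) *m P) ('e_i *m invmx Q).
  have -> : t *m G *m (('e_i : 'rV[o]_N) *m invmx Q)^T = sg *m ('e_i : 'rV[o]_N)^T.
    by rewrite trmx_mul !mulmxA.
  rewrite trmx_delta -colE mxE; apply => k l.
  rewrite hA !mulmxA (mulmxK uP) -scalemxAl -(rowE i (diag_mx d)) row_diag_mx scalerA -hc.
  by rewrite -scalemxAl subrr mxE; apply: pdvd0.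
have [sg' hsg'] : exists sg' : 'rV[o]_N, forall i,
    (sg' 0 i = 0 /\ pdvd (d 0 i) (pi ^+ r)) \/
    (sg' 0 i = sg 0 i /\ pdvd (pi ^+ r.+1) (d 0 i)).
  have hex (i : 'I_N) : exists x : o,
      (x = 0 /\ pdvd (d 0 i) (pi ^+ r)) \/
      (x = sg 0 i /\ pdvd (pi ^+ r.+1) (d 0 i)).
    by case: (dvr_split (d 0 i) r hd) => h; [exists 0; left | exists (sg 0 i); right].
  have [f hf] := fin_all_exists hex.
  by exists (\row_i f i) => i; rewrite mxE; apply: hf.
have uQt : (invmx Q)^T \in unitmx by rewrite unitmx_tr unitmx_inv.
exists (sg' *m invmx ((invmx Q)^T) *m invmx G); split.
  have -> : t = sg *m invmx ((invmx Q)^T) *m invmx G.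
    by rewrite /sg mulmxK // mulmxK.
  apply: mc_mulr; apply: mc_mulr => k l.
  rewrite !ord1 mxE; case: (hsg' l) => [[-> h]|[-> _]].
    by rewrite add0r [(- sg) 0 l]mxE; apply: pdvdN; apply: hsg.
  by rewrite [(- sg) 0 l]mxE addrN; apply: pdvd0.
have hA2 : A = - (G *m A^T *m invmx G).
  by rewrite -mulNmx -hskew mulmxK.
rewrite hA2 mulmxN; apply: mc_opp.
have -> : sg' *m invmx (invmx Q)^T *m invmx G *m (G *m A^T *m invmx G)
   = sg' *m diag_mx d *m ((invmx P)^T *m invmx G).
  rewrite hA !trmx_mul tr_diag_mx !mulmxA mulmxKV // mulmxKV //.
have -> : (0 : 'rV[o]_N) = 0 *m ((invmx P)^T *m invmx G) by rewrite mul0mx.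
apply: mc_mulr => k l; rewrite mul_mx_diag !mxE subr0.
rewrite (ord1 k).
case: (hsg' l) => [[-> _]|[_ h]]; first by rewrite mul0r; apply: pdvd0.
exact: pdvdMl.
Qed.


Lemma sl0 (o : comRingType) n : in_sl (0 : 'M[o]_n).
Proof. exact: mxtrace0. Qed.
Lemma slD (o : comRingType) n (A B : 'M[o]_n) : in_sl A -> in_sl B -> in_sl (A + B).
Proof. by rewrite /in_sl mxtraceD => -> ->; rewrite addr0. Qed.
Lemma trN (o : comRingType) n (A : 'M[o]_n) : \tr (- A) = - \tr A.
Proof. by rewrite -scaleN1r mxtraceZ mulN1r. Qed.
Lemma trB (o : comRingType) n (A B : 'M[o]_n) : \tr (A - B) = \tr A - \tr B.
Proof. by rewrite mxtraceD trN. Qed.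
Lemma slN (o : comRingType) n (A : 'M[o]_n) : in_sl A -> in_sl (- A).
Proof. by rewrite /in_sl trN => ->; rewrite oppr0. Qed.
Lemma slB (o : comRingType) n (A B : 'M[o]_n) : in_sl A -> in_sl B -> in_sl (A - B).
Proof. by move=> ha hb; apply: slD => //; apply: slN. Qed.
Lemma slZ (o : comRingType) n (a : o) (A : 'M[o]_n) : in_sl A -> in_sl (a *: A).
Proof. by rewrite /in_sl mxtraceZ => ->; rewrite mulr0. Qed.
Lemma sl_lie (o : comRingType) n (A B : 'M[o]_n) : in_sl (lie A B).
Proof. by rewrite /in_sl /lie trB mxtrace_mulC subrr. Qed.
Lemma sl_cancel (o : idomainType) n (d : o) (A : 'M[o]_n) : d != 0 ->
  in_sl (d *: A) -> in_sl A.
Proof. by move=> d0; rewrite /in_sl mxtraceZ => /eqP; rewrite mulf_eq0 (negPf d0) => /eqP. Qed.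

Lemma lieN (o : comRingType) n (A B : 'M[o]_n) : lie A B = - lie B A.
Proof. by rewrite /lie opprB. Qed.
Lemma lieDr (o : comRingType) n (A B C : 'M[o]_n) : lie A (B + C) = lie A B + lie A C.
Proof. by rewrite /lie mulmxDl mulmxDr addrACA opprD. Qed.
Lemma lieDl (o : comRingType) n (A B C : 'M[o]_n) : lie (A + B) C = lie A C + lie B C.
Proof. by rewrite /lie mulmxDl mulmxDr addrACA opprD. Qed.
Lemma lieZr (o : comRingType) n (a : o) (A B : 'M[o]_n) : lie A (a *: B) = a *: lie A B.
Proof. by rewrite /lie scalerBr -scalemxAl -scalemxAr. Qed.
Lemma lieZl (o : comRingType) n (a : o) (A B : 'M[o]_n) : lie (a *: A) B = a *: lie A B.
Proof. by rewrite /lie scalerBr -scalemxAl -scalemxAr. Qed.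

Lemma mc_mult (o : comRingType) m n (d : o) (A B : 'M[o]_(m, n)) :
  mc d A B -> exists D, A = d *: D + B.
Proof.
move=> h.
have hex (k : 'I_m * 'I_n) : exists c : o, (A - B) k.1 k.2 = c * d by apply: h.
have [f hf] := fin_all_exists hex.
exists (\matrix_(i, j) f (i, j)); apply/matrixP => i j.
by rewrite !mxE mulrC -(hf (i, j)) /= [(A - B) i j]mxE [(- B) i j]mxE subrK.
Qed.

Lemma mc_add (o : comRingType) m n (d : o) (A B C D : 'M[o]_(m, n)) :
  mc d A B -> mc d C D -> mc d (A + C) (B + D).
Proof.
move=> h1 h2 i j; rewrite opprD addrACA mxE; apply: pdvdD; [exact: h1 | exact: h2].
Qed.
Lemma mc_oppr (o : comRingType) m n (d : o) (A B : 'M[o]_(m, n)) :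
  mc d A B -> mc d (- A) (- B).
Proof. by move=> h i j; rewrite -opprD mxE; apply: pdvdN; apply: h. Qed.
Lemma mc_sub (o : comRingType) m n (d : o) (A B C D : 'M[o]_(m, n)) :
  mc d A B -> mc d C D -> mc d (A - C) (B - D).
Proof. by move=> h1 h2; apply: mc_add => //; apply: mc_oppr. Qed.
Lemma mc_scale (o : comRingType) m n (d a : o) (A : 'M[o]_(m, n)) :
  mc d (d *: A) 0.
Proof. by move=> i j; rewrite subr0 mxE mulrC; exists (A i j). Qed.
Lemma mc_weak (o : comRingType) m n (p : o) k l (A B : 'M[o]_(m, n)) : (k <= l)%N ->
  mc (p ^+ l) A B -> mc (p ^+ k) A B.
Proof. by move=> hkl h i j; apply: (pdvd_weak hkl); apply: h. Qed.
Lemma mc_lie (o : comRingType) n (d : o) (A B C D : 'M[o]_n) :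
  mc d A B -> mc d C D -> mc d (lie A C) (lie B D).
Proof.
move=> h1 h2; apply: mc_sub.
  apply: (mc_trans (B := B *m C)); first exact: mc_mulr.
  exact: mc_mull.
apply: (mc_trans (B := D *m A)); first exact: mc_mulr.
exact: mc_mull.
Qed.
Lemma mc_tr (o : comRingType) n (d : o) (A B : 'M[o]_n) :
  mc d A B -> pdvd d (\tr A - \tr B).
Proof.
by move=> h; rewrite -trB /mxtrace; apply: pdvd_sum => i; apply: h.
Qed.


Lemma kappa_facts (o : comRingType) n (pi : o) (kappa : 'M[o]_n -> 'M[o]_n -> o) :
  good_form pi kappa ->
  [/\ forall Z, in_sl Z -> kappa 0 Z = 0,
      forall Z, in_sl Z -> kappa Z 0 = 0,
      forall a X Z, in_sl X -> in_sl Z -> kappa (a *: X) Z = a * kappa X Z,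
      forall a X Z, in_sl X -> in_sl Z -> kappa Z (a *: X) = a * kappa Z X &
      [/\ forall X Y Z, in_sl X -> in_sl Y -> in_sl Z -> kappa (X + Y) Z = kappa X Z + kappa Y Z,
          forall X Y Z, in_sl X -> in_sl Y -> in_sl Z -> kappa Z (X + Y) = kappa Z X + kappa Z Y,
          forall X Z, in_sl X -> in_sl Z -> kappa (- X) Z = - kappa X Z &
          forall X Z, in_sl X -> in_sl Z -> kappa Z (- X) = - kappa Z X]].
Proof.
case=> hl hr _ _ _.
have k0l Z : in_sl Z -> kappa 0 Z = 0.
  move=> hZ; have := hl 1 0 0 Z (sl0 _ _) (sl0 _ _) hZ.
  rewrite scale1r addr0 mul1r => /(congr1 (fun v => v - kappa 0 Z)).
  by rewrite subrr addrK => <-.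
have k0r Z : in_sl Z -> kappa Z 0 = 0.
  move=> hZ; have := hr 1 Z 0 0 hZ (sl0 _ _) (sl0 _ _).
  rewrite scale1r addr0 mul1r => /(congr1 (fun v => v - kappa Z 0)).
  by rewrite subrr addrK => <-.
have kZl a X Z : in_sl X -> in_sl Z -> kappa (a *: X) Z = a * kappa X Z.
  by move=> hX hZ; have := hl a X 0 Z hX (sl0 _ _) hZ; rewrite addr0 k0l // addr0.
have kZr a X Z : in_sl X -> in_sl Z -> kappa Z (a *: X) = a * kappa Z X.
  by move=> hX hZ; have := hr a Z X 0 hZ hX (sl0 _ _); rewrite addr0 k0r // addr0.
split => //; split.
- by move=> X Y Z hX hY hZ; have := hl 1 X Y Z hX hY hZ; rewrite scale1r mul1r.
- by move=> X Y Z hX hY hZ; have := hr 1 Z X Y hZ hX hY; rewrite scale1r mul1r.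
- by move=> X Z hX hZ; rewrite -scaleN1r kZl // mulN1r.
- by move=> X Z hX hZ; rewrite -scaleN1r kZr // mulN1r.
Qed.


Definition E0 (o : comRingType) n : 'M[o]_n.+1 := delta_mx 0 0.
Definition proj (o : comRingType) n (X : 'M[o]_n.+1) := X - \tr X *: E0 o n.
Definition trc (o : comRingType) n (X : 'M[o]_n.+1) : o := \tr X.
Definition k2 (o : comRingType) n (kappa : 'M[o]_n.+1 -> 'M[o]_n.+1 -> o) X Y :=
  kappa (proj X) (proj Y) + trc X * trc Y.
Definition Bv (o : comRingType) n (k : 'I_(n.+1 * n.+1)) : 'M[o]_n.+1 := vec_mx 'e_k.
Arguments Bv {o n} k.
Definition Gm (o : comRingType) n (kappa : 'M[o]_n.+1 -> 'M[o]_n.+1 -> o) :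
  'M[o]_(n.+1 * n.+1) := \matrix_(k, l) k2 kappa (Bv k) (Bv l).
Definition Tm (o : comRingType) n (x X : 'M[o]_n.+1) := lie x (proj X).
Definition Am (o : comRingType) n (x : 'M[o]_n.+1) : 'M[o]_(n.+1 * n.+1) :=
  \matrix_(k, j) (mxvec (Tm x (Bv k))) 0 j.

Lemma trE0 (o : comRingType) n : \tr (E0 o n) = 1.
Proof.
rewrite /mxtrace (bigD1 0) //= mxE eqxx big1 ?addr0 // => i /negPf ne.
by rewrite mxE ne.
Qed.
Lemma sl_proj (o : comRingType) n (X : 'M[o]_n.+1) : in_sl (proj X).
Proof. by rewrite /in_sl /proj trB mxtraceZ trE0 mulr1 subrr. Qed.
Lemma proj_id (o : comRingType) n (X : 'M[o]_n.+1) : in_sl X -> proj X = X.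
Proof. by rewrite /proj => ->; rewrite scale0r subr0. Qed.
Lemma proj_lin (o : comRingType) n (a : o) (X Y : 'M[o]_n.+1) :
  proj (a *: X + Y) = a *: proj X + proj Y.
Proof.
rewrite /proj mxtraceD mxtraceZ scalerDl -scalerA scalerBr opprD !addrA.
by congr (_ - _); rewrite addrAC.
Qed.
Lemma proj_cong (o : comRingType) n (d : o) (X : 'M[o]_n.+1) :
  pdvd d (\tr X) -> mc d X (proj X).
Proof.
move=> h i j; rewrite /proj opprB addrC subrK mxE mulrC.
by apply: pdvdMl.
Qed.

Lemma vec_sum (o : comRingType) n (u : 'rV[o]_(n.+1 * n.+1)) :
  vec_mx u = \sum_k u 0 k *: Bv k.
Proof.
rewrite {1}[u]row_sum_delta linear_sum; apply: eq_bigr => k _.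
by rewrite linearZ.
Qed.

Lemma fsum_scal (o : comRingType) m (f : 'M[o]_m -> o) (I : finType) (c : I -> o) X :
  (forall a X Y, f (a *: X + Y) = a * f X + f Y) ->
  f (\sum_i c i *: X i) = \sum_i c i * f (X i).
Proof.
move=> hf; have f0 : f 0 = 0.
  have := hf 1 0 0; rewrite scale1r addr0 mul1r => /(congr1 (fun v => v - f 0)).
  by rewrite subrr addrK => <-.
elim/big_rec2: _ => [//|i y1 y2 _ <-].
by rewrite hf.
Qed.

Lemma fsum_mat (o : comRingType) m (f : 'M[o]_m -> 'M[o]_m) (I : finType) (c : I -> o) X :
  (forall a X Y, f (a *: X + Y) = a *: f X + f Y) ->
  f (\sum_i c i *: X i) = \sum_i c i *: f (X i).
Proof.
move=> hf; have f0 : f 0 = 0.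
  have := hf 1 0 0; rewrite !scale1r addr0 => /(congr1 (fun v => v - f 0)).
  by rewrite subrr addrK => <-.
elim/big_rec2: _ => [//|i y1 y2 _ <-].
by rewrite hf.
Qed.

Lemma trDZ (o : comRingType) n (a : o) (X Y : 'M[o]_n.+1) :
  trc (a *: X + Y) = a * trc X + trc Y.
Proof.
rewrite /trc /mxtrace mulr_sumr -big_split /=; apply: eq_bigr => i _.
by rewrite !mxE.
Qed.

Lemma k2_linl (o : comRingType) n (pi : o) (kappa : 'M[o]_n.+1 -> 'M[o]_n.+1 -> o) :
  good_form pi kappa -> forall a X Y Z,
  k2 kappa (a *: X + Y) Z = a * k2 kappa X Z + k2 kappa Y Z.
Proof.
move=> hk a X Y Z; case: (hk) => hl _ _ _ _.
rewrite /k2 proj_lin hl; try exact: sl_proj. rewrite (@trDZ o n a X Y); ring.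
Qed.
Lemma k2_linr (o : comRingType) n (pi : o) (kappa : 'M[o]_n.+1 -> 'M[o]_n.+1 -> o) :
  good_form pi kappa -> forall a X Y Z,
  k2 kappa Z (a *: X + Y) = a * k2 kappa Z X + k2 kappa Z Y.
Proof.
move=> hk a X Y Z; case: (hk) => _ hr _ _ _.
rewrite /k2 proj_lin hr; try exact: sl_proj. rewrite (@trDZ o n a X Y); ring.
Qed.

Lemma Tm_lin (o : comRingType) n (x : 'M[o]_n.+1) a X Y :
  Tm x (a *: X + Y) = a *: Tm x X + Tm x Y.
Proof. by rewrite /Tm proj_lin lieDr lieZr. Qed.

Lemma trc_lie (o : comRingType) n (A B : 'M[o]_n.+1) : trc (lie A B) = 0.
Proof. exact: sl_lie. Qed.

Lemma k2_skew (o : comRingType) n (pi : o) (kappa : 'M[o]_n.+1 -> 'M[o]_n.+1 -> o)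
  (x : 'M[o]_n.+1) : good_form pi kappa -> in_sl x -> forall X Y,
  k2 kappa (Tm x X) Y = - k2 kappa X (Tm x Y).
Proof.
move=> hk hx X Y; have [_ _ _ _ [_ _ kNl _]] := kappa_facts hk.
case: (hk) => _ _ _ hinv _.
rewrite /k2 /Tm (proj_id (sl_lie x (proj X))) (proj_id (sl_lie x (proj Y))).
rewrite !trc_lie !mulr0 !mul0r !addr0 lieN kNl; try (exact: sl_lie); try (exact: sl_proj).
by rewrite hinv //; exact: sl_proj.
Qed.

Lemma pairing (o : comRingType) n (pi : o) (kappa : 'M[o]_n.+1 -> 'M[o]_n.+1 -> o) :
  good_form pi kappa -> forall u w : 'rV[o]_(n.+1 * n.+1),
  (u *m Gm kappa *m w^T) 0 0 = k2 kappa (vec_mx u) (vec_mx w).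
Proof.
move=> hk u w.
have hL V : k2 kappa (vec_mx u) V = \sum_k u 0 k * k2 kappa (Bv k) V.
  rewrite vec_sum.
  exact: (@fsum_scal _ _ (fun X => k2 kappa X V) _ (fun k => u 0 k) Bv
           (fun a X Y => k2_linl hk a X Y V)).
have hR V : k2 kappa V (vec_mx w) = \sum_l w 0 l * k2 kappa V (Bv l).
  rewrite vec_sum.
  exact: (@fsum_scal _ _ (fun X => k2 kappa V X) _ (fun k => w 0 k) Bv
           (fun a X Y => k2_linr hk a X Y V)).
rewrite hL; under eq_bigr => k _ do rewrite hR.
rewrite mxE (eq_bigr (fun l => \sum_k u 0 k * k2 kappa (Bv k) (Bv l) * w 0 l)); last first.
  by move=> l _; rewrite !mxE mulr_suml; apply: eq_bigr => k _; rewrite mxE.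
rewrite exchange_big /=; apply: eq_bigr => k _; rewrite mulr_sumr.
by apply: eq_bigr => l _; ring.
Qed.

Lemma Am_mul (o : comRingType) n (x : 'M[o]_n.+1) (u : 'rV[o]_(n.+1 * n.+1)) :
  u *m Am x = mxvec (Tm x (vec_mx u)).
Proof.
rewrite mulmx_sum_row vec_sum.
rewrite (@fsum_mat _ _ (Tm x) _ (fun k => u 0 k) Bv (@Tm_lin _ _ x)).
rewrite linear_sum; apply: eq_bigr => k _; rewrite linearZ; congr (_ *: _).
by apply/matrixP => i j; rewrite !mxE (ord1 i).
Qed.

Lemma ent (o : comRingType) N (M : 'M[o]_N) k l :
  M k l = (('e_k : 'rV[o]_N) *m M *m ('e_l : 'rV[o]_N)^T) 0 0.
Proof. by rewrite -rowE trmx_delta -colE !mxE. Qed.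

Lemma Am_skew (o : comRingType) n (pi : o) (kappa : 'M[o]_n.+1 -> 'M[o]_n.+1 -> o)
  (x : 'M[o]_n.+1) : good_form pi kappa -> in_sl x ->
  Am x *m Gm kappa = - (Gm kappa *m (Am x)^T).
Proof.
move=> hk hx; apply/matrixP => k l.
rewrite [RHS]mxE ent [in RHS]ent !mulmxA (pairing hk) Am_mul mxvecK.
rewrite -mulmxA -trmx_mul (pairing hk) Am_mul mxvecK.
exact: (k2_skew hk hx).
Qed.

Lemma Gm_nondeg (o : comRingType) n (pi : o) (kappa : 'M[o]_n.+1 -> 'M[o]_n.+1 -> o) :
  good_form pi kappa -> forall v : 'rV[o]_(n.+1 * n.+1),
  mc pi (v *m Gm kappa) 0 -> mc pi v 0.
Proof.
move=> hk v hv; set V := vec_mx v.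
have hl l : pdvd pi (k2 kappa V (Bv l)).
  have e : (v *m Gm kappa *m ('e_l : 'rV[o]_(n.+1 * n.+1))^T) 0 0
      = (v *m Gm kappa) 0 l by rewrite trmx_delta -colE mxE.
  by have := hv 0 l; rewrite subr0 -e (pairing hk).
have hY Y : pdvd pi (k2 kappa V Y).
  rewrite -[Y]mxvecK vec_sum.
  rewrite (@fsum_scal _ _ (fun X => k2 kappa V X) _ (fun k => mxvec Y 0 k) Bv
           (fun a X Y => k2_linr hk a X Y V)).
  by apply: pdvd_sum => l; apply: pdvdMl.
have [_ k0r _ _ _] := kappa_facts hk.
case: (hk) => _ _ _ _ hnd.
have hP : forall i j, pdvd pi (proj V i j).
  apply: hnd; first exact: sl_proj.
  move=> Y hY'; have := hY Y; rewrite /k2 (proj_id hY') /trc hY' mulr0 addr0.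
  by [].
have hT : pdvd pi (trc V).
  have := hY (E0 o n); rewrite /k2 /trc trE0 mulr1.
  have -> : proj (E0 o n) = 0 by rewrite /proj trE0 scale1r subrr.
  by rewrite k0r ?(add0r (\tr V)) //; exact: sl_proj.
move=> i0 k; rewrite subr0 (ord1 i0); case/mxvec_indexP: k => i j.
rewrite -[v]vec_mxK mxvecE -/V.
have -> : V i j = proj V i j + trc V * E0 o n i j.
  by rewrite /proj !mxE subrK.
by apply: pdvdD; [apply: hP | apply: pdvdMr].
Qed.


Lemma mc_vec (o : comRingType) m n (d : o) (A B : 'M[o]_(m, n)) :
  mc d (mxvec A) (mxvec B) -> mc d A B.
Proof.
by move=> h i j; have := h 0 (mxvec_index i j); rewrite -linearB /= mxvecE.
Qed.
Lemma mc_vec' (o : comRingType) m n (d : o) (A B : 'M[o]_(m, n)) :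
  mc d A B -> mc d (mxvec A) (mxvec B).
Proof.
move=> h i k; rewrite (ord1 i); case/mxvec_indexP: k => a b.
by rewrite -linearB /= mxvecE.
Qed.
Lemma mc_cancel (o : idomainType) m n (p : o) k (A B : 'M[o]_(m, n)) : p != 0 ->
  mc (p ^+ k.+1) (p ^+ k *: A) (p ^+ k *: B) -> mc p A B.
Proof.
move=> p0 h i j; apply: (pdvd_cancel (k := k) p0).
by have := h i j; rewrite -scalerBr mxE.
Qed.

Ltac slt := solve [repeat first [assumption | exact: sl_lie | exact: sl_proj |
  exact: sl0 | apply: slD | apply: slB | apply: slZ | apply: slN]].

Lemma hard (o : idomainType) (pi : o) (n : nat)
  (kappa : 'M[o]_n.+1 -> 'M[o]_n.+1 -> o) (r : nat) (e b xc : 'M[o]_n.+1) :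
  is_DVR_unif pi -> good_form pi kappa ->
  in_sl e -> in_sl b -> in_sl xc ->
  mxcong (pi ^+ r) b e ->
  (forall z, shadow pi r.+1 b z <-> shadow pi r e z) ->
  forall y, stab_sh pi kappa r e xc y -> shadow pi r.+1 (b + pi ^+ r *: xc) y.
Proof.
move=> hd hk se sb sxc hbe hsp y [[y0 [[sy0 cy0] yy0]] hz].
have p0 : pi != 0 by case: hd.
have pr0 : pi ^+ r != 0 by rewrite expf_neq0.
have [k0l k0r kZl kZr [kDl kDr kNl kNr]] := kappa_facts hk.
case: (hk) => _ _ _ hinv _.
set x := b + pi ^+ r *: xc.
have sx : in_sl x by slt.
have uG := gram_unit hd (Gm_nondeg hk).
have hyp : forall u w : 'rV[o]_(n.+1 * n.+1),
    mc (pi ^+ r.+1) (pi ^+ r *: w) (u *m Am x) ->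
    pdvd pi ((mxvec y0 *m Gm kappa *m w^T) 0 0).
  move=> u w huw; rewrite (pairing hk) mxvecK.
  set W := vec_mx w; set V := proj (vec_mx u).
  have sV : in_sl V by apply: sl_proj.
  rewrite Am_mul -[w]vec_mxK -/W -linearZ in huw.
  have hW : mc (pi ^+ r.+1) (pi ^+ r *: W) (lie x V) by apply: mc_vec.
  have ex : lie x V = lie b V + pi ^+ r *: lie xc V by rewrite /x lieDl lieZl.
  have hb : mc (pi ^+ r) (lie b V) 0.
    have h1 : mc (pi ^+ r) (lie x V) 0.
      apply: (mc_trans (B := pi ^+ r *: W)).
        by apply: mc_sym; apply: (mc_weak (leqnSn r)).
      exact: mc_scale.
    have -> : lie b V = lie x V - pi ^+ r *: lie xc V by rewrite ex addrK.
    by rewrite -[0 in X in mc _ _ X](subr0 0); apply: mc_sub => //; apply: mc_scale.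
  have he : centr pi r e V.
    split => //; apply: (mc_trans (B := lie b V)) => //.
    by apply: mc_lie; [apply: mc_sym | apply: mc_refl].
  have [D hD] := mc_mult hb; rewrite addr0 in hD.
  have sD : in_sl D by apply: (sl_cancel pr0); rewrite -hD; apply: sl_lie.
  have hW2 : mc pi W (D + lie xc V).
    apply: (mc_cancel (k := r) p0); rewrite scalerDr -hD -ex; exact: hW.
  have trW : pdvd pi (\tr W).
    have := mc_tr hW2; have -> : \tr (D + lie xc V) = 0 by apply: slD => //; apply: sl_lie.
    by rewrite subr0.
  have hPW : mc pi (proj W) (D + lie xc V).
    by apply: (mc_trans (B := W)) => //; apply: mc_sym; apply: proj_cong.
  have [M hM] := mc_mult hPW.
  have sM : in_sl M.
    apply: (sl_cancel p0); have -> : pi *: M = proj W - (D + lie xc V) by rewrite hM addrK.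
    by slt.
  rewrite /k2 (proj_id sy0) /trc sy0 mul0r addr0 hM.
  have sL : in_sl (lie xc V) by apply: sl_lie.
  rewrite (kDr (pi *: M) (D + lie xc V) y0); try slt.
  rewrite (kDr D (lie xc V) y0) // (kZr pi M y0) //.
  apply: pdvdD; first by apply: pdvdMr; apply: pdvd_refl.
  apply: pdvdD.
  -
    have [Y [[sY cY] y0Y]] := (hsp y0).2 (ex_intro _ y0 (conj (conj sy0 cy0) (mc_refl _ _))).
    have [K hK] := mc_mult y0Y.
    have sK : in_sl K.
      apply: (sl_cancel p0); have -> : pi *: K = y0 - Y by rewrite hK addrK.
      slt.
    have [F hF] := mc_mult cY; rewrite addr0 in hF.
    have sF : in_sl F by apply: (sl_cancel (expf_neq0 r.+1 p0)); rewrite -hF; apply: sl_lie.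
    rewrite hK kDl ?kZl //; try slt.
    apply: pdvdD; first by apply: pdvdMr; apply: pdvd_refl.
    apply: (pdvd_cancel (k := r) p0).
    rewrite -kZr // -hD -hinv // lieN kNl ?hF ?kZl //; try slt.
    by apply: pdvdN; exists (kappa F V); rewrite mulrC.
  -
    have hzV := hz V (ex_intro _ V (conj he (mc_refl _ _))).
    have [K2 hK2] := mc_mult yy0.
    rewrite hK2 lieDl lieZl kDr ?kZr in hzV; try slt.
    rewrite -hinv // lieN kNl ?hinv //; try slt.
    apply: pdvdN; rewrite -[kappa xc _](addKr (pi * kappa xc (lie K2 V))).
    by apply: pdvdD => //; apply: pdvdN; apply: pdvdMr; apply: pdvd_refl.
have [s [hs1 hs2]] := core hd uG (Am_skew hk sx) hyp.
exists (proj (vec_mx s)); split.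
  split; first exact: sl_proj.
  by apply: mc_vec; rewrite -Am_mul linear0.
apply: (mc_trans (B := y0)) => //.
have h1 : mc pi (vec_mx s) y0 by apply: mc_vec; rewrite vec_mxK.
apply: (mc_trans (B := vec_mx s)); first exact: mc_sym.
apply: proj_cong; have := mc_tr h1; by rewrite sy0 subr0.
Qed.

Lemma easy (o : idomainType) (pi : o) (n : nat)
  (kappa : 'M[o]_n -> 'M[o]_n -> o) (r : nat) (e b xc : 'M[o]_n) :
  is_DVR_unif pi -> good_form pi kappa ->
  in_sl e -> in_sl b -> in_sl xc ->
  mxcong (pi ^+ r) b e ->
  (forall z, shadow pi r.+1 b z <-> shadow pi r e z) ->
  forall y, shadow pi r.+1 (b + pi ^+ r *: xc) y -> stab_sh pi kappa r e xc y.
Proof.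
move=> hd hk se sb sxc hbe hsp y [Y [[sY cY] yY]].
have p0 : pi != 0 by case: hd.
have pr0 : pi ^+ r.+1 != 0 by rewrite expf_neq0.
have [k0l k0r kZl kZr [kDl kDr kNl kNr]] := kappa_facts hk.
case: (hk) => _ _ _ hinv _.
have ex : lie (b + pi ^+ r *: xc) Y = lie b Y + pi ^+ r *: lie xc Y by rewrite lieDl lieZl.
have [F1 hF1] := mc_mult cY; rewrite addr0 in hF1.
have sF1 : in_sl F1 by apply: (sl_cancel pr0); rewrite -hF1; apply: sl_lie.
split.
  exists Y; split => //; split => //.
  apply: (mc_trans (B := lie b Y)).
    by apply: mc_lie; [apply: mc_sym | apply: mc_refl].
  have -> : lie b Y = lie (b + pi ^+ r *: xc) Y - pi ^+ r *: lie xc Y by rewrite ex addrK.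
  rewrite -[0 in X in mc _ _ X](subr0 0); apply: mc_sub; last by apply: mc_scale.
  by apply: (mc_weak (leqnSn r)).
move=> z hzs; have [Z [[sZ cZ] zZ]] := (hsp z).2 hzs.
have [F2 hF2] := mc_mult cZ; rewrite addr0 in hF2.
have sF2 : in_sl F2 by apply: (sl_cancel pr0); rewrite -hF2; apply: sl_lie.
have [K1 hK1] := mc_mult yY.
have [K2 hK2] := mc_mult zZ.
have -> : lie y z = pi *: (lie K1 z + lie Y K2) + lie Y Z.
  by rewrite hK1 lieDl lieZl {2}hK2 lieDr lieZr addrA -scalerDr.
rewrite kDr ?kZr; try slt.
apply: pdvdD; first by apply: pdvdMr; apply: pdvd_refl.
rewrite -hinv //; apply: (pdvd_cancel (k := r) p0).
rewrite -kZl; try slt.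
have -> : pi ^+ r *: lie xc Y = pi ^+ r.+1 *: F1 - lie b Y by rewrite -hF1 ex addrC addKr.
rewrite (kDl (pi ^+ r.+1 *: F1) (- lie b Y) Z); try slt.
rewrite kZl // kNl; try slt.
rewrite hinv // lieN kNr; try slt.
rewrite -hinv // hF2 kZl //; try slt.
by rewrite opprK; apply: pdvdD; apply: pdvdMr; apply: pdvd_refl.
Qed.

Unset Implicit Arguments. Set Strict Implicit.

Theorem mainTheorem2 (o : idomainType) (pi : o) (n : nat)
  (kappa : 'M[o]_n -> 'M[o]_n -> o) (r : nat) (e b xc : 'M[o]_n) :
  is_DVR_unif pi -> compact_DVR pi -> good_form pi kappa ->
  (0 < r)%N ->
  in_sl e -> in_sl b -> in_sl xc ->
  (* b is a lift of e *)
  mxcong (pi ^+ r) b e ->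
  (* b is shadow-preserving *)
  (forall z, shadow pi r.+1 b z <-> shadow pi r e z) ->
  forall y, stab_sh pi kappa r e xc y <-> shadow pi r.+1 (b + pi ^+ r *: xc) y.
Proof.
move=> hd _ hk _ se sb sxc hbe hsp y; split; last exact: easy.
case: n kappa e b xc hk se sb sxc hbe hsp y => [|n] kappa e b xc hk se sb sxc hbe hsp y.
  move=> _; exists y; split; last by move=> [].
  by split; [rewrite /in_sl /mxtrace big_ord0 | move=> [] ].
exact: hard.
Qed.
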